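(* Let $\boldsymbol\phi(n,m,\alpha,\beta,l)\in\mathbb C^N$, $(n,m,\alpha,\beta,l)\in\mathbb Z^5$, satisfy the condition equation set: for all arguments, $$\sigma_1\boldsymbol\phi(n-1,\cdot,l)=\boldsymbol\phi(n,\cdot,l)-\boldsymbol\phi(n-1,\cdot,l+1),\quad \sigma_2\boldsymbol\phi(m-1,\cdot,l)=\boldsymbol\phi(m,\cdot,l)-\boldsymbol\phi(m-1,\cdot,l+1),$$ $$\sigma_3\boldsymbol\phi(\alpha-1,\cdot,l)=\boldsymbol\phi(\alpha,\cdot,l)-\boldsymbol\phi(\alpha-1,\cdot,l+1),\quad \sigma_4\boldsymbol\phi(\beta-1,\cdot,l)=\boldsymbol\phi(\beta,\cdot,l)-\boldsymbol\phi(\beta-1,\cdot,l+1),$$ $$\boldsymbol K\boldsymbol\phi(l)=\boldsymbol\phi(l+4)-\epsilon_1\boldsymbol\phi(l+3)+\epsilon_2\boldsymbol\phi(l+2)-\epsilon_3\boldsymbol\phi(l+1),$$ (in each identity only the indicated variable is shifted) where $\boldsymbol K$ is an arbitrary constant $N\times N$ matrix. Define the Casoratians (built from $\boldsymbol\phi$) $f'=|0,\dots,N-1|$, $g'=|0,\dots,N-2,N|$, $h'=|0,\dots,N-2,N+1|$, $s'=|0,\dots,N-3,N-1,N|$, $\theta'=|0,\dots,N-3,N-1,N+1|$, $\mu'=|0,\dots,N-2,N+2|$, $\nu'=|0,\dots,N-4,N-2,N-1,N|$. Then $$\widetilde f'(\sigma_1g'+h')-\widetilde g'(\sigma_1f'+g')+f'\widetilde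 s'=0,\qquad \widehat f'(\sigma_2g'+h')-\widehat g'(\sigma_2f'+g')+f'\widehat s'=0,$$ $$\widetilde f'(\sigma_1h'+\mu')-\widetilde h'(\sigma_1f'+g')+f'\widetilde\theta'=0,\qquad \widehat f'(\sigma_2h'+\mu')-\widehat h'(\sigma_2f'+g')+f'\widehat\theta'=0,$$ $$\widetilde f'(\sigma_1s'+\theta')-f'(\sigma_1\widetilde s'-\widetilde\nu')-\widetilde g's'=0,\qquad \widehat f'(\sigma_2s'+\theta')-f'(\sigma_2\widehat s'-\widehat\nu')-\widehat g's'=0,$$ $$\widetilde f'\widehat g'-\widehat f'\widetilde g'+(\sigma_1-\sigma_2)(\widetilde f'\widehat f'-f'\widehat{\widetilde f}')=0,$$ $$R(\sigma_1,\sigma_2)(f'\widehat{\widetilde f}'-\widetilde f'\widehat f')+Q(\sigma_1,\sigma_2)(g'\widehat{\widetilde f}'-f'\widehat{\widetilde g}')-(\sigma_1+\sigma_2+\epsilon_1)(g'\widehat{\widetilde g}'-f'\widehat{\widetilde h}'-\widehat{\widetilde f}'s')+g'\widehat{\widetilde h}'-s'\widehat{\widetilde g}'-f'\widehat{\widetilde\mu}'+\nu'\widehat{\widetilde f}'=0.$$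
   Context: Fix $\alpha_1,\alpha_2,\alpha_3,\delta\in\mathbb C$ and pairwise distinct $p,q,a,b\in\mathbb C$. Put $\sigma_1=p-\delta$, $\sigma_2=q-\delta$, $\sigma_3=a-\delta$, $\sigma_4=b-\delta$; $\epsilon_1=4\delta-\alpha_3$, $\epsilon_2=6\delta^2-3\delta\alpha_3+\alpha_2$, $\epsilon_3=4\delta^3-3\delta^2\alpha_3+2\delta\alpha_2-\alpha_1$; $Q(x,y)=(x+y)^2-xy+\epsilon_1(x+y)+\epsilon_2$; $R(x,y)=(x+y)(x^2+y^2)+\epsilon_1((x+y)^2-xy)+\epsilon_2(x+y)+\epsilon_3$. Casoratian notation: $|l_1,\dots,l_N|=\det(\boldsymbol\phi(l_1),\dots,\boldsymbol\phi(l_N))$ where $\boldsymbol\phi(l)$ means $\boldsymbol\phi(n,m,\alpha,\beta,l)$; a run ''$0,\dots,j$'' with $j<0$ is empty, and if the listed indices number more than $N$ the symbol is defined to be $0$. Shifts of a function $F(n,m)$: $\widetilde F=F(n+1,m)$, $\widehat F=F(n,m+1)$, $\widehat{\widetilde F}=F(n+1,m+1)$. *)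

(* Defs.v *)
(* Complex numbers are modelled as R[i] = complex R for an
   arbitrary R : realType (i.e. a complete archimedean ordered field = the reals). *)
From HB Require Import structures.
From mathcomp Require Import all_boot all_order all_algebra.
From mathcomp Require Import reals complex.
Set Implicit Arguments. Unset Strict Implicit. Unset Printing Implicit Defensive.
Import Order.TTheory GRing.Theory Num.Theory.
Local Open Scope ring_scope.
Local Open Scope complex_scope.

Definition irun (j : int) : seq int :=
  if (j < 0)%R then [::] else [seq Posz k | k <- iota 0 (absz j).+1].

(* Casoratian |l_1,...,l_k| of phi : int -> C^N : det of the matrix whose
   j-th column is phi (l_j); defined to be 0 when more than N indices are listed. *)
Definition casoratian (C : comNzRingType) (N : nat) (phi : int -> 'cV[C]_N)
  (s : seq int) : C :=
  if size s == N then \det (\matrix_(i < N, j < N) phi (nth 0 s j) i ord0)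
  else 0.

Section Params.
Variable C : comNzRingType.
Definition eps1 (al3 delta : C) : C := 4 * delta - al3.
Definition eps2 (al2 al3 delta : C) : C := 6 * delta ^+ 2 - 3 * delta * al3 + al2.
Definition eps3 (al1 al2 al3 delta : C) : C :=
  4 * delta ^+ 3 - 3 * delta ^+ 2 * al3 + 2 * delta * al2 - al1.
Definition Qpol (e1 e2 x y : C) : C := (x + y) ^+ 2 - x * y + e1 * (x + y) + e2.
Definition Rpol (e1 e2 e3 x y : C) : C :=
  (x + y) * (x ^+ 2 + y ^+ 2) + e1 * ((x + y) ^+ 2 - x * y) + e2 * (x + y) + e3.
End Params.

(* Main.v *)
Require Import Defs.
From HB Require Import structures.
From mathcomp Require Import all_boot all_order all_algebra.
From mathcomp Require Import reals complex.
From mathcomp Require Import ring zify.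
Import Order.TTheory GRing.Theory Num.Theory.

Set Implicit Arguments. Unset Strict Implicit. Unset Printing Implicit Defensive.
Local Open Scope ring_scope.

Section Dets.
Variable (F : comNzRingType) (N : nat).
Implicit Types (L P R W : seq 'cV[F]_N) (v w : 'cV[F]_N).

Definition mxs L : 'M[F]_N := \matrix_(i, j) (nth 0 L j) i 0.
Definition dets L : F := if size L == N then \det (mxs L) else 0.

Lemma dets_dup L : ~~ uniq L -> dets L = 0.
Proof.
rewrite /dets; case: eqP => // hs /(uniqPn 0) [i [j [hij hj he]]].
have hj' : (j < N)%N by rewrite -hs.
have hi' : (i < N)%N by apply: ltn_trans hj'.
rewrite -det_tr; apply: (determinant_alternate (i1 := Ordinal hi') (i2 := Ordinal hj')).
  by rewrite neq_ltn hij.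
by move=> k; rewrite !mxE /= he.
Qed.

Lemma nth_mid P R v w k : k != size P ->
  nth 0 (P ++ v :: R) k = nth 0 (P ++ w :: R) k.
Proof.
move=> hk; rewrite !nth_cat; case: ltnP => // h.
case e: (k - size P)%N => [|j] //=.
move/eqP: e; rewrite subn_eq0 => h2.
by move: hk; rewrite eqn_leq h2 h.
Qed.

Lemma nth_midE P R v : nth 0 (P ++ v :: R) (size P) = v.
Proof. by rewrite nth_cat ltnn subnn. Qed.

Lemma dets_lin P R a b v w :
  dets (P ++ (a *: v + b *: w) :: R) = a * dets (P ++ v :: R) + b * dets (P ++ w :: R).
Proof.
rewrite /dets !size_cat /=; case: eqP => hs; last by rewrite !mulr0 addr0.
have hi : (size P < N)%N by lia.
rewrite -!(det_tr (mxs _)).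
apply: (determinant_multilinear (i0 := Ordinal hi)).
- apply/rowP => j; rewrite !mxE /= !nth_midE !mxE //.
- apply/matrixP => k j; rewrite !mxE.
  have h := neq_lift (Ordinal hi) k; rewrite eq_sym in h.
  by rewrite (@nth_mid P R v (a *: v + b *: w)).
- apply/matrixP => k j; rewrite !mxE.
  have h := neq_lift (Ordinal hi) k; rewrite eq_sym in h.
  by rewrite (@nth_mid P R w (a *: v + b *: w)).
Qed.

Lemma dets_scale P R a v : dets (P ++ (a *: v) :: R) = a * dets (P ++ v :: R).
Proof.
have := dets_lin P R a 0 v v; rewrite scale0r addr0 mul0r addr0 => ->//.
Qed.

Lemma dets_add P R v w : dets (P ++ (v + w) :: R) = dets (P ++ v :: R) + dets (P ++ w :: R).
Proof. by have := dets_lin P R 1 1 v w; rewrite !scale1r !mul1r. Qed.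

Lemma dets_opp P R v : dets (P ++ (- v) :: R) = - dets (P ++ v :: R).
Proof. by rewrite -scaleN1r dets_scale mulN1r. Qed.

Lemma dets_sub P R v w : dets (P ++ (v - w) :: R) = dets (P ++ v :: R) - dets (P ++ w :: R).
Proof. by rewrite dets_add dets_opp. Qed.

Lemma dets_zero P R : dets (P ++ (0 : 'cV_N) :: R) = 0.
Proof. by have := dets_scale P R 0 0; rewrite scale0r mul0r. Qed.

Lemma dets_sum P R n (c : 'I_n -> F) (vs : 'I_n -> 'cV_N) :
  dets (P ++ (\sum_(i < n) c i *: vs i) :: R) = \sum_(i < n) c i * dets (P ++ vs i :: R).
Proof.
elim: n c vs => [|n IH] c vs; first by rewrite !big_ord0 dets_zero.
by rewrite !big_ord_recr /= dets_add dets_scale IH.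
Qed.

Lemma dets_swap P R v w : dets (P ++ v :: w :: R) = - dets (P ++ w :: v :: R).
Proof.
have h : dets (P ++ (v + w) :: (v + w) :: R) = 0 by apply: dets_dup; rewrite cat_uniq /= inE eqxx /= !andbF.
have e : forall x y, dets (P ++ x :: y :: R) = dets (rcons P x ++ y :: R) by move=> x y; rewrite cat_rcons.
move: h; rewrite dets_add !e !dets_add -!e.
rewrite (@dets_dup (P ++ v :: v :: R)); last by rewrite cat_uniq /= inE eqxx /= !andbF.
rewrite (@dets_dup (P ++ w :: w :: R)); last by rewrite cat_uniq /= inE eqxx /= !andbF.
by rewrite add0r addr0 => /eqP; rewrite addr_eq0 => /eqP.
Qed.

Lemma dets_rot P L v : dets (P ++ v :: L) = (-1) ^+ size L * dets (P ++ rcons L v).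
Proof.
elim: L P => [|y L IH] P /=; first by rewrite mul1r.
rewrite dets_swap -cat_rcons IH cat_rcons exprS; ring.
Qed.


Lemma dets_size L : size L != N -> dets L = 0.
Proof. by rewrite /dets => /negbTE ->. Qed.

Definition delete (T : Type) (j : nat) (s : seq T) := take j s ++ drop j.+1 s.

Lemma size_delete (T : Type) j (s : seq T) : (j < size s)%N -> size (delete j s) = (size s).-1.
Proof. move=> h; rewrite /delete size_cat size_take size_drop h; lia. Qed.

Lemma nth_delete (T : Type) (x0 : T) j (s : seq T) k : (j < size s)%N ->
  nth x0 (delete j s) k = nth x0 s (if (k < j)%N then k else k.+1).
Proof.
move=> h; rewrite /delete nth_cat size_take h.
case: ltnP => hk; first by rewrite nth_take.
rewrite nth_drop; congr nth; lia.
Qed.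

Lemma dets_cramer W : size W = N.+1 ->
  \sum_(k < N.+1) ((-1) ^+ k * dets (delete k W)) *: nth 0 W k = 0.
Proof.
move=> hW; apply/matrixP => r c; rewrite ord1 summxE !mxE.
pose ri (i : 'I_N.+1) : 'I_N := if unlift ord0 i is Some i' then i' else r.
pose B := \matrix_(i < N.+1, j < N.+1) (nth 0 W j) (ri i) 0.
have hB : \det B = 0.
  apply: (determinant_alternate (i1 := ord0) (i2 := lift ord0 r)); first by rewrite neq_lift.
  by move=> j; rewrite !mxE /ri liftK unlift_none.
transitivity (\det B); last exact hB.
rewrite (expand_det_row B ord0); apply: eq_bigr => k _.
rewrite !mxE /ri unlift_none /cofactor /dets size_delete hW // eqxx add0n.
rewrite [RHS]mulrC; congr (_ * _ * _); congr (\det _).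
apply/matrixP => i j; rewrite !mxE.
rewrite /ri liftK nth_delete ?hW //.
by rewrite /= /bump; case: ltnP => h; rewrite ?add0n ?add1n.
Qed.

Lemma dets_gp W P R : size W = N.+1 ->
  \sum_(k < N.+1) (-1) ^+ k * dets (delete k W) * dets (P ++ nth 0 W k :: R) = 0.
Proof.
move=> hW; have := dets_cramer hW; move/(congr1 (fun v => dets (P ++ v :: R))).
by rewrite dets_sum dets_zero.
Qed.

Lemma dets_mem P L R v : v \in L -> dets (P ++ L ++ v :: R) = 0.
Proof.
move=> hv; apply: dets_dup; rewrite !cat_uniq /= hv /=.
by rewrite !andbF.
Qed.

Lemma dets_memr P R v : v \in P -> dets (P ++ v :: R) = 0.
Proof. by move=> hv; have := @dets_mem [::] P R v hv. Qed.

Lemma delete_rcons (T : Type) j (s : seq T) x : (j < size s)%N ->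
  delete j (rcons s x) = rcons (delete j s) x.
Proof.
move=> h; rewrite /delete -!cats1 take_cat drop_cat h.
case: ltnP => h2; first by rewrite catA.
have e : j.+1 = size s by lia.
by rewrite e subnn drop0 drop_size cats0.
Qed.

Lemma delete_last (T : Type) (s : seq T) x : delete (size s) (rcons s x) = s.
Proof.
rewrite /delete -cats1 take_cat drop_cat ltnn subnn take0 cats0 ltnNge leqnSn /=.
by rewrite subSnn /= cats0.
Qed.

Section Shift.
Variables (y y' : nat -> 'cV[F]_N) (s : F).
Hypothesis hy : forall l, y' l = s *: y l + y l.+1.

Lemma dets_mixed k R : dets (mkseq y k.+1 ++ R) = dets (y 0%N :: mkseq y' k ++ R).
Proof.
elim: k R => [|k IH] R; first by [].
rewrite mkseqS cat_rcons IH.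
have e : y k.+1 = y' k - s *: y k by rewrite hy addrC addKr.
have h1 := dets_sub (y 0%N :: mkseq y' k) R (y' k) (s *: y k).
have h2 := dets_scale (y 0%N :: mkseq y' k) R s (y k).
rewrite /= in h1 h2; rewrite e h1 h2.
have h3 : dets (y 0%N :: mkseq y' k ++ y k :: R) = 0.
  rewrite -IH (@dets_memr (mkseq y k.+1)) //.
  by rewrite mkseqS mem_rcons mem_head.
by rewrite h3 mulr0 subr0 [mkseq y' k.+1]mkseqS cat_rcons.
Qed.

Lemma dets_expand k P R : dets (P ++ mkseq y' k ++ R) =
  \sum_(j < k.+1) s ^+ j * dets (P ++ delete j (mkseq y k.+1) ++ R).
Proof.
elim: k P R => [|k IH] P R; first by rewrite big_ord1 /= expr0 mul1r.
have dl : forall t, delete t (mkseq y t.+1) = mkseq y t.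
  by move=> t; rewrite mkseqS -{1}(size_mkseq y t) delete_last.
have dr : forall t j, (j < t)%N -> delete j (mkseq y t.+1) = rcons (delete j (mkseq y t)) (y t).
  by move=> t j hj; rewrite mkseqS delete_rcons ?size_mkseq.
rewrite mkseqS cat_rcons catA hy dets_add dets_scale -!catA !IH.
rewrite [in RHS]big_ord_recr (dl k.+1).
rewrite [X in s * X]big_ord_recr (dl k).
rewrite big1 ?add0r; last first.
  move=> j _; have hj : (j < k)%N := ltn_ord j.
  by rewrite (dr k j hj) (@dets_mem P _ R (y k)) ?mulr0 // mem_rcons mem_head.
rewrite addrC; congr (_ + _).
  apply: eq_bigr => j _; have hj : (j < k.+1)%N := ltn_ord j.
  by rewrite (dr k.+1 j hj) cat_rcons.
rewrite Monoid.mul1m [mkseq y k.+1]mkseqS cat_rcons /=.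
rewrite exprS; ring.
Qed.
End Shift.

Lemma sign_sq n : (-1) ^+ n * (-1) ^+ n = 1 :> F.
Proof. by rewrite -exprMn mulrNN mulr1 expr1n. Qed.

Lemma sign_cancel n (X : F) : (-1) ^+ n * X = 0 -> X = 0.
Proof. by move=> h; rewrite -[X]mul1r -(sign_sq n) -mulrA h mulr0. Qed.

Lemma delete_mkseq (T : Type) (y : nat -> T) n k : (k < n)%N ->
  delete k (mkseq y n) = mkseq y k ++ map y (iota k.+1 (n - k.+1)%N).
Proof.
move=> h; rewrite /delete /mkseq -map_take -map_drop take_iota drop_iota add0n.
by rewrite (minn_idPl (ltnW h)).
Qed.

Lemma sum3 M (T : nat -> F) : (forall k, (k < M)%N -> T k = 0) ->
  \sum_(k < M.+3) T k = T M + T M.+1 + T M.+2.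
Proof.
move=> h; rewrite -(big_mkord xpredT) !big_nat_recr //= big_nat_cond big1 ?add0r //.
by move=> k /andP[/andP[_ hk] _]; apply: h.
Qed.

Lemma sum4 M (T : nat -> F) : (forall k, (k < M)%N -> T k = 0) ->
  \sum_(k < M.+4) T k = T M + T M.+1 + T M.+2 + T M.+3.
Proof.
move=> h; rewrite -(big_mkord xpredT) !big_nat_recr //= big_nat_cond big1 ?add0r //.
by move=> k /andP[/andP[_ hk] _]; apply: h.
Qed.

Lemma sum3' M (T : nat -> F) : (forall k, (0 < k)%N -> (k <= M)%N -> T k = 0) ->
  \sum_(k < M.+3) T k = T 0%N + T M.+1 + T M.+2.
Proof.
move=> h; rewrite -(big_mkord xpredT) big_ltn // big_nat_recr // big_nat_recr //=.
rewrite big_nat_cond big1 ?add0r ?addrA //.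
by move=> k /andP[/andP[hk1 hk] _]; apply: h.
Qed.

Lemma sumNu M (T : nat -> F) : (forall k, (k.+1 < M)%N -> T k = 0) ->
  \sum_(k < M.+3) T k = (if (0 < M)%N then T M.-1 else 0) + T M + T M.+1 + T M.+2.
Proof.
case: M => [|M] h; first by rewrite sum3 ?add0r.
by rewrite sum4 // => k hk; apply: h.
Qed.
End Dets.


Section Tilde.
Variables (F : comNzRingType) (M : nat) (x z : nat -> 'cV[F]_M.+2) (s : F).
Hypothesis hz : forall k, z k = s *: x k + x k.+1.

Let f0 := dets (mkseq x M.+2).
Let g0 := dets (mkseq x M.+1 ++ [:: x M.+2]).
Let h0 := dets (mkseq x M.+1 ++ [:: x M.+3]).
Let s0 := dets (mkseq x M ++ [:: x M.+1; x M.+2]).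
Let t0 := dets (mkseq x M ++ [:: x M.+1; x M.+3]).
Let mu0 := dets (mkseq x M.+1 ++ [:: x M.+4]).
Let ft := dets (mkseq z M.+2).
Let gt := dets (mkseq z M.+1 ++ [:: z M.+2]).
Let ht := dets (mkseq z M.+1 ++ [:: z M.+3]).
Let st := dets (mkseq z M ++ [:: z M.+1; z M.+2]).
Let tt := dets (mkseq z M ++ [:: z M.+1; z M.+3]).
Let nut := dets (mkseq z M.-1 ++ [:: z M; z M.+1; z M.+2]).

Lemma mem_mk (y : nat -> 'cV[F]_M.+2) k n : (k < n)%N -> y k \in mkseq y n.
Proof. by move=> h; apply/mapP; exists k => //; rewrite mem_iota. Qed.

Lemma mk_rcons (y : nat -> 'cV[F]_M.+2) n R : mkseq y n ++ y n :: R = mkseq y n.+1 ++ R.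
Proof. by rewrite mkseqS cat_rcons. Qed.

Let psi v := dets (mkseq x M.+1 ++ [:: v]).

Lemma psi_z k : (k < M)%N -> psi (z k) = 0.
Proof.
move=> hk; rewrite /psi hz dets_add dets_scale !dets_memr ?mulr0 ?addr0 //; apply: mem_mk; lia.
Qed.

Lemma psi_zM : psi (z M) = f0.
Proof.
by rewrite /psi hz dets_add dets_scale dets_memr ?mulr0 ?add0r ?mk_rcons ?cats0 // mem_mk.
Qed.

Lemma psi_zM1 : psi (z M.+1) = s * f0 + g0.
Proof. by rewrite /psi hz dets_add dets_scale mk_rcons cats0. Qed.

Lemma psi_zM2 : psi (z M.+2) = s * g0 + h0.
Proof. by rewrite /psi hz dets_add dets_scale. Qed.

Lemma psi_zM3 : psi (z M.+3) = s * h0 + mu0.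
Proof. by rewrite /psi hz dets_add dets_scale. Qed.

Lemma del2 (y : nat -> 'cV[F]_M.+2) n : delete n.+2 (mkseq y n.+3) = mkseq y n.+2.
Proof. by rewrite delete_mkseq // subnn cats0. Qed.
Lemma dl1 (y : nat -> 'cV[F]_M.+2) n : delete n.+1 (mkseq y n.+2) = mkseq y n.+1.
Proof. by rewrite delete_mkseq // subnn cats0. Qed.
Lemma dl0 (y : nat -> 'cV[F]_M.+2) n : delete n (mkseq y n.+2) = mkseq y n ++ [:: y n.+1].
Proof. by rewrite delete_mkseq // subSnn. Qed.
Lemma del1 (y : nat -> 'cV[F]_M.+2) n : delete n.+1 (mkseq y n.+3) = mkseq y n.+1 ++ [:: y n.+2].
Proof. by rewrite delete_mkseq // subSnn. Qed.
Lemma del0 (y : nat -> 'cV[F]_M.+2) n : delete n (mkseq y n.+3) = mkseq y n ++ [:: y n.+1; y n.+2].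
Proof. have e : (n.+3 - n.+1 = 2)%N by lia. rewrite delete_mkseq; [by rewrite e | lia]. Qed.
Lemma delm (y : nat -> 'cV[F]_M.+2) n : delete n (mkseq y n.+4) = mkseq y n ++ [:: y n.+1; y n.+2; y n.+3].
Proof. have e : (n.+4 - n.+1 = 3)%N by lia. rewrite delete_mkseq; [by rewrite e | lia]. Qed.

Lemma eq1 : ft * (s * g0 + h0) - gt * (s * f0 + g0) + f0 * st = 0.
Proof.
have := @dets_gp _ _ (mkseq z M.+3) (mkseq x M.+1) [::] (size_mkseq _ _).
rewrite (@sum3 _ M (fun k => (-1) ^+ k * dets (delete k (mkseq z M.+3)) * psi (nth 0 (mkseq z M.+3) k))); last first.
  by move=> k hk; rewrite nth_mkseq; [rewrite psi_z // mulr0 | lia].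
rewrite !nth_mkseq //; try by lia.
rewrite psi_zM psi_zM1 psi_zM2 del0 del1 del2 -/ft -/gt -/st !exprS => h.
apply: (sign_cancel (n := M)); rewrite -h; ring.
Qed.

Lemma eq3 : ft * (s * h0 + mu0) - ht * (s * f0 + g0) + f0 * tt = 0.
Proof.
pose W := rcons (mkseq z M.+2) (z M.+3).
have sW : size W = M.+3 by rewrite size_rcons size_mkseq.
have := @dets_gp _ _ W (mkseq x M.+1) [::] sW.
have nW : forall k, (k < M.+2)%N -> nth 0 W k = z k.
  by move=> k hk; rewrite nth_rcons size_mkseq hk nth_mkseq.
rewrite (@sum3 _ M (fun k => (-1) ^+ k * dets (delete k W) * psi (nth 0 W k))); last first.
  by move=> k hk; rewrite nW; [rewrite psi_z // mulr0 | lia].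
rewrite (nW M) ?(nW M.+1); try by lia.
have -> : nth 0 W M.+2 = z M.+3 by rewrite nth_rcons size_mkseq ltnn eqxx.
rewrite psi_zM psi_zM1 psi_zM3.
have d2 : delete M.+2 W = mkseq z M.+2.
  by have := delete_last (mkseq z M.+2) (z M.+3); rewrite size_mkseq.
have d1 : delete M.+1 W = mkseq z M.+1 ++ [:: z M.+3].
  by rewrite /W delete_rcons ?size_mkseq // dl1 -cats1.
have d0 : delete M W = mkseq z M ++ [:: z M.+1; z M.+3].
  rewrite /W delete_rcons ?size_mkseq // delete_mkseq //.
  by rewrite subSS subSnn -cats1 -catA.
rewrite d0 d1 d2 -/ft -/ht -/tt !exprS => h.
apply: (sign_cancel (n := M)); rewrite -h; ring.
Qed.

Let psi5 v := dets ((mkseq x M ++ [:: x M.+1]) ++ [:: v]).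

Lemma eq5 : ft * (s * s0 + t0) - f0 * (s * st - nut) - gt * s0 = 0.
Proof.
have := @dets_gp _ _ (mkseq z M.+3) (mkseq x M ++ [:: x M.+1]) [::] (size_mkseq _ _).
rewrite (@sumNu _ M (fun k => (-1) ^+ k * dets (delete k (mkseq z M.+3)) * psi5 (nth 0 (mkseq z M.+3) k))); last first.
  move=> k hk; rewrite nth_mkseq; last by lia.
  rewrite /psi5 hz dets_add dets_scale.
  rewrite !dets_memr; first by rewrite mulr0 addr0 mulr0.
  all: try (rewrite mem_cat mem_mk ?orTb //; lia).
have hM : (if (0 < M)%N then
            (-1) ^+ M.-1 * dets (delete M.-1 (mkseq z M.+3)) * psi5 (nth 0 (mkseq z M.+3) M.-1)
          else 0) = (-1) ^+ M.+1 * nut * (- f0).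
  case: (posnP M) => [hM0|hpos].
    by rewrite /nut dets_size ?mulr0 ?mul0r // size_cat size_mkseq /=; lia.
  rewrite nth_mkseq; last by lia.
  have -> : delete M.-1 (mkseq z M.+3) = mkseq z M.-1 ++ [:: z M; z M.+1; z M.+2].
    rewrite delete_mkseq; last by lia.
    have e : (M.+3 - M.-1.+1 = 3)%N by lia.
    by rewrite e prednK.
  rewrite /psi5 [z M.-1]hz dets_add dets_scale (@dets_memr _ _ (mkseq x M ++ [:: x M.+1]) [::] (x M.-1)) ?mulr0 ?add0r; last first.
    by rewrite mem_cat mem_mk ?orTb //; lia.
  rewrite prednK // -catA /= (@dets_swap _ _ (mkseq x M) [::] (x M.+1) (x M)).
  rewrite mk_rcons mk_rcons cats0 -/f0 -/nut.
  have e : (-1) ^+ M.+1 = (-1) ^+ M.-1 :> F by rewrite -(prednK hpos) !exprS; ring.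
  by rewrite e; ring.
have p5M : psi5 (z M) = - s * f0.
  rewrite /psi5 hz dets_add dets_scale (@dets_memr _ _ (mkseq x M ++ [:: x M.+1]) [::] (x M.+1)) ?addr0; last by rewrite mem_cat mem_head orbT.
  by rewrite -catA /= (@dets_swap _ _ (mkseq x M) [::] (x M.+1) (x M)) mk_rcons mk_rcons cats0 -/f0 mulrN mulNr.
have p5M1 : psi5 (z M.+1) = s0.
  rewrite /psi5 hz dets_add dets_scale (@dets_memr _ _ (mkseq x M ++ [:: x M.+1]) [::] (x M.+1)) ?mulr0 ?add0r; last by rewrite mem_cat mem_head orbT.
  by rewrite -catA.
have p5M2 : psi5 (z M.+2) = s * s0 + t0.
  by rewrite /psi5 hz dets_add dets_scale -!catA.
rewrite hM !nth_mkseq //; try by lia.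
rewrite p5M p5M1 p5M2 del0 del1 del2 -/ft -/gt -/st !exprS => h.
apply: (sign_cancel (n := M)); rewrite -h; ring.
Qed.
End Tilde.


Lemma from_rel (F : comNzRingType) (X L c : F) : X = c * L -> L = 0 -> X = 0.
Proof. by move=> -> ->; rewrite mulr0. Qed.

Lemma delete_cons (T : Type) k (a : T) s : delete k.+1 (a :: s) = a :: delete k s.
Proof. by []. Qed.

Section Mixed.
Variables (F : comNzRingType) (M : nat) (x z w u : nat -> 'cV[F]_M.+2) (s1 s2 : F).
Hypothesis hz : forall k, z k = s1 *: x k + x k.+1.
Hypothesis hw : forall k, w k = s2 *: x k + x k.+1.
Hypothesis hu1 : forall k, u k = s1 *: w k + w k.+1.
Hypothesis hu2 : forall k, u k = s2 *: z k + z k.+1.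

Let f0 := dets (mkseq x M.+2).
Let ft := dets (mkseq z M.+2).
Let gt := dets (mkseq z M.+1 ++ [:: z M.+2]).
Let fh := dets (mkseq w M.+2).
Let gh := dets (mkseq w M.+1 ++ [:: w M.+2]).
Let fht := dets (mkseq u M.+2).

Let psi v := dets (mkseq z M.+1 ++ [:: v]).

Lemma eq7 : ft * gh - fh * gt + (s1 - s2) * (ft * fh - f0 * fht) = 0.
Proof.
pose W := w 0%N :: mkseq u M.+2.
have sW : size W = M.+3 by rewrite /W -cat1s size_cat size_mkseq.
have := @dets_gp _ _ W (mkseq z M.+1) [::] sW.
rewrite (@sum3' _ M (fun k => (-1) ^+ k * dets (delete k W) * psi (nth 0 W k))); last first.
  move=> k hk0 hk; case: k hk0 hk => [//|k] _ hk.
  rewrite /= nth_mkseq; last by lia.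
  rewrite /psi hu2 dets_add dets_scale !dets_memr; first by rewrite mulr0 addr0 mulr0.
  all: try (rewrite mem_mk //; lia).
have n1 : nth 0 W M.+1 = u M.
  by rewrite /W; change (nth 0 (mkseq u M.+2) M = u M); rewrite nth_mkseq.
have n2 : nth 0 W M.+2 = u M.+1.
  by rewrite /W; change (nth 0 (mkseq u M.+2) M.+1 = u M.+1); rewrite nth_mkseq.
have n0 : nth 0 W 0 = w 0%N by [].
rewrite n0 n1 n2.
have pw : psi (w 0%N) = (s1 - s2) * (- 1) ^+ M * f0.
  have e : w 0%N = z 0%N - (s1 - s2) *: x 0%N.
    by rewrite hz hw; apply/matrixP => i j; rewrite !mxE; ring.
  rewrite /psi e dets_sub dets_scale dets_memr ?mem_mk // sub0r.
  have hf : f0 = (-1) ^+ M.+1 * dets (mkseq z M.+1 ++ [:: x 0%N]).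
    have h1 := @dets_mixed _ _ x z s1 hz M.+1 [::].
    have h2 := @dets_rot _ _ [::] (mkseq z M.+1) (x 0%N).
    rewrite !cats0 in h1; rewrite !cat0s in h2.
    by rewrite /f0 h1 h2 size_mkseq cats1.
  rewrite hf exprS; set D := dets _.
  have ee := sign_sq F M.
  transitivity (- (s1 - s2) * D * ((-1) ^+ M * (-1) ^+ M)); first by rewrite ee; ring.
  ring.
have puM : psi (u M) = ft.
  rewrite /psi hu2 dets_add dets_scale dets_memr ?mem_mk // mulr0 add0r.
  by rewrite mk_rcons cats0.
have puM1 : psi (u M.+1) = s2 * ft + gt.
  by rewrite /psi hu2 dets_add dets_scale mk_rcons cats0.
have d0 : dets (delete 0 W) = fht by [].
have d1 : dets (delete M.+1 W) = s1 * fh + gh.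
  have -> : delete M.+1 W = w 0%N :: (mkseq u M ++ [:: u M.+1]) by rewrite /W delete_cons (@dl0 _ M).
  rewrite -(@dets_mixed _ _ w u s1 hu1 M [:: u M.+1]).
  by rewrite hu1 dets_add dets_scale mk_rcons cats0.
have d2 : dets (delete M.+2 W) = fh.
  have -> : delete M.+2 W = w 0%N :: mkseq u M.+1 by rewrite /W delete_cons (@dl1 _ M u M).
  by have := @dets_mixed _ _ w u s1 hu1 M.+1 [::]; rewrite !cats0.
rewrite pw puM puM1 d0 d1 d2 !exprS expr0 -(signr_odd F M) => h.
case: (odd M) h => h; rewrite ?expr0 ?expr1 in h.
  by apply: (from_rel (c := 1) _ h); ring.
by apply: (from_rel (c := -1) _ h); ring.
Qed.

Variables (K : 'M[F]_M.+2) (e1 e2 e3 : F).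
Hypothesis hK : forall k, K *m x k = x k.+4 - e1 *: x k.+3 + e2 *: x k.+2 - e3 *: x k.+1.

Let g0 := dets (mkseq x M.+1 ++ [:: x M.+2]).
Let s0 := dets (mkseq x M ++ [:: x M.+1; x M.+2]).
Let nu0 := dets (mkseq x M.-1 ++ [:: x M; x M.+1; x M.+2]).
Let ght := dets (mkseq u M.+1 ++ [:: u M.+2]).
Let hht := dets (mkseq u M.+1 ++ [:: u M.+3]).
Let muht := dets (mkseq u M.+1 ++ [:: u M.+4]).
Let Rp := Rpol e1 e2 e3 s1 s2.
Let Qp := Qpol e1 e2 s1 s2.
Let Om v := dets (mkseq u M.+1 ++ [:: v]).
Let cc (k : nat) := (-1) ^+ k * dets (delete k (mkseq x M.+3)).
Let PU k := u k.+2 - (s1 + s2 + e1) *: u k.+1 + Qp *: u k.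

Lemma VI k : PU k = K *m x k + Rp *: w k + (s1 * s2 * Qp - Rp * s2) *: x k.
Proof.
rewrite /PU !hu1 !hw hK; apply/matrixP => i j; rewrite !mxE /Rp /Qp /Rpol /Qpol; ring.
Qed.

Lemma cram : \sum_(k < M.+3) cc k *: x k = 0.
Proof.
rewrite -[RHS](@dets_cramer _ _ (mkseq x M.+3) (size_mkseq _ _)).
by apply: eq_bigr => k _; rewrite nth_mkseq.
Qed.

Lemma VS : \sum_(k < M.+3) cc k *: PU k = Rp *: \sum_(k < M.+3) cc k *: w k.
Proof.
transitivity (K *m (\sum_(k < M.+3) cc k *: x k) + Rp *: (\sum_(k < M.+3) cc k *: w k)
   + (s1 * s2 * Qp - Rp * s2) *: (\sum_(k < M.+3) cc k *: x k)).
  rewrite mulmx_sumr !scaler_sumr -!big_split; apply: eq_bigr => k _.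
  by rewrite VI !scalerDr -scalemxAr !scalerA [cc k * Rp]mulrC [cc k * (_ - _)]mulrC.
by rewrite cram mulmx0 scaler0 add0r addr0.
Qed.

Lemma OmU j : (j <= M)%N -> Om (u j) = 0.
Proof. by move=> hj; rewrite /Om dets_memr // mem_mk. Qed.

Lemma OmS : \sum_(k < M.+3) cc k * Om (PU k) = Rp * \sum_(k < M.+3) cc k * Om (w k).
Proof.
have h1 := @dets_sum _ _ (mkseq u M.+1) [::] _ (fun k : 'I_M.+3 => cc k) (fun k : 'I_M.+3 => PU k).
have h2 := @dets_sum _ _ (mkseq u M.+1) [::] _ (fun k : 'I_M.+3 => cc k) (fun k : 'I_M.+3 => w k).
rewrite /Om -h1 -h2 VS dets_scale //.
Qed.

Lemma tk k : (k <= M.+1)%N -> Om (w k) = (- s1) ^+ k * Om (w 0%N).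
Proof.
elim: k => [|k IH] hk; first by rewrite expr0 mul1r.
have e : w k.+1 = u k - s1 *: w k by rewrite hu1 addrC addKr.
rewrite {1}/Om e dets_sub dets_scale -/(Om (u k)) -/(Om (w k)) OmU; last by lia.
rewrite IH; last by lia.
by rewrite exprS; set ee := (- s1) ^+ k; ring.
Qed.

Lemma tN : Om (w M.+2) = (- s1) ^+ M.+2 * Om (w 0%N) + fht.
Proof.
have e : w M.+2 = u M.+1 - s1 *: w M.+1 by rewrite hu1 addrC addKr.
rewrite {1}/Om e dets_sub dets_scale -/(Om (w M.+1)) tk //.
rewrite /Om mk_rcons cats0 -/fht [(- s1) ^+ M.+2]exprS.
by set ee := (- s1) ^+ M.+1; ring.
Qed.

Lemma Cft : \sum_(k < M.+3) cc k * (- s1) ^+ k = ft.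
Proof.
have := @dets_expand _ _ x z s1 hz M.+2 [::] [::]; rewrite !cats0 /= -/ft => ->.
apply: eq_bigr => k _; rewrite /cc cats0 (exprNn s1).
have := sign_sq F k; set e := (-1) ^+ k => ee; set t := s1 ^+ k.
transitivity (e * e * (t * dets (delete k (mkseq x M.+3)))); first by ring.
by rewrite ee mul1r.
Qed.

Lemma SumT : \sum_(k < M.+3) cc k * Om (w k) = Om (w 0%N) * ft + cc M.+2 * fht.
Proof.
rewrite -Cft mulr_sumr [in LHS]big_ord_recr [in RHS]big_ord_recr /= tN.
rewrite (eq_bigr (fun k : 'I_M.+2 => Om (w 0%N) * (cc k * (- s1) ^+ k))); last first.
  move=> k _; rewrite tk /=; last by have := ltn_ord k; lia.
  ring.
ring.
Qed.

Lemma fhE : fh = (-1) ^+ M.+1 * Om (w 0%N).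
Proof.
have h1 := @dets_mixed _ _ w u s1 hu1 M.+1 [::].
have h2 := @dets_rot _ _ [::] (mkseq u M.+1) (w 0%N).
rewrite !cats0 in h1; rewrite !cat0s in h2.
by rewrite /fh h1 h2 size_mkseq /Om cats1.
Qed.

Lemma eq8 : Rp * (f0 * fht - ft * fh) + Qp * (g0 * fht - f0 * ght)
   - (s1 + s2 + e1) * (g0 * ght - f0 * hht - fht * s0)
   + g0 * hht - s0 * ght - f0 * muht + nu0 * fht = 0.
Proof.
have h := OmS.
rewrite SumT (@sumNu _ M (fun k => cc k * Om (PU k))) in h; last first.
  move=> k hk; rewrite /PU {1}/Om dets_add dets_sub !dets_scale -!/(Om _) !OmU; try lia.
  by rewrite !mulr0 subr0 addr0 mulr0.
have OmP : forall k, Om (PU k) = Om (u k.+2) - (s1 + s2 + e1) * Om (u k.+1) + Qp * Om (u k).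
  by move=> k; rewrite /PU {1}/Om dets_add dets_sub !dets_scale.
have hM : (if (0 < M)%N then cc M.-1 * Om (PU M.-1) else 0) = (-1) ^+ M.+1 * nu0 * fht.
  case: (posnP M) => [hM0|hpos].
    by rewrite /nu0 dets_size ?mulr0 ?mul0r // size_cat size_mkseq /=; lia.
  rewrite OmP prednK // (OmU (leqnn M)) (OmU (leq_pred M)) /Om mk_rcons cats0 -/fht /cc.
  have -> : delete M.-1 (mkseq x M.+3) = mkseq x M.-1 ++ [:: x M; x M.+1; x M.+2].
    rewrite delete_mkseq; last by lia.
    have e : (M.+3 - M.-1.+1 = 3)%N by lia.
    by rewrite e prednK.
  have e : (-1) ^+ M.+1 = (-1) ^+ M.-1 :> F by rewrite -(prednK hpos) !exprS; ring.
  rewrite -/nu0 e; set ee := (-1) ^+ M.-1; ring.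
have o1 : Om (u M.+1) = fht by rewrite /Om mk_rcons cats0.
have c0 : cc M = (-1) ^+ M * s0 by rewrite /cc (@del0 _ M).
have c1 : cc M.+1 = (-1) ^+ M.+1 * g0 by rewrite /cc (@del1 _ M).
have c2 : cc M.+2 = (-1) ^+ M.+2 * f0 by rewrite /cc (@del2 _ M).
have o2 : Om (u M.+2) = ght by [].
have o3 : Om (u M.+3) = hht by [].
have o4 : Om (u M.+4) = muht by [].
rewrite hM !OmP (OmU (leqnn M)) o1 o2 o3 o4 c0 c1 c2 in h.
move/eqP: h; rewrite -subr_eq0 => /eqP h.
rewrite fhE; move: h; rewrite !exprS -(signr_odd F M); set t0 := Om (w 0%N).
case: (odd M) => h; rewrite ?expr0 ?expr1 in h *.
  by apply: (from_rel (c := 1) _ h); rewrite /Rp /Qp; ring.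
by apply: (from_rel (c := -1) _ h); rewrite /Rp /Qp; ring.
Qed.
End Mixed.


Section Conv.
Variables (C : comNzRingType) (N : nat) (ph : int -> 'cV[C]_N).
Let X k := ph (Posz k).

Lemma cas_dets s : casoratian ph s = dets (map ph s).
Proof.
rewrite /casoratian /dets size_map; case: eqP => // hs.
congr (\det _); apply/matrixP => i j; rewrite !mxE (nth_map 0) ?hs // [X in _ = ph _ i X]ord1.
Qed.

Lemma irunE (n k : nat) : irun (Posz n - Posz k) = map Posz (iota 0 (n.+1 - k)).
Proof.
rewrite /irun; case: ltrP => hh.
  have -> : (n.+1 - k = 0)%N by move: hh; rewrite ltrBlDr add0r ltz_nat; lia.
  by [].
have e : absz (Posz n - Posz k) = (n - k)%N.
  by move: hh; rewrite subr_ge0 lez_nat => hh; rewrite subzn ?absz_nat.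
rewrite e; congr (map _ (iota _ _)).
by move: hh; rewrite subr_ge0 lez_nat; lia.
Qed.

Lemma mapE n : map ph (irun (Posz N - Posz n)) = mkseq X (N.+1 - n).
Proof. by rewrite irunE -map_comp. Qed.

Lemma convf : casoratian ph (irun (Posz N - 1)) = dets (mkseq X N).
Proof. by rewrite cas_dets (mapE 1) subn1. Qed.

Hypothesis hN : (0 < N)%N.

Lemma convg : casoratian ph (irun (Posz N - 2) ++ [:: Posz N]) = dets (mkseq X N.-1 ++ [:: X N]).
Proof. by rewrite cas_dets map_cat (mapE 2) subn2. Qed.

Lemma convh : casoratian ph (irun (Posz N - 2) ++ [:: Posz N + 1]) = dets (mkseq X N.-1 ++ [:: X N.+1]).
Proof. by rewrite cas_dets map_cat (mapE 2) subn2 /= /X; congr (dets (_ ++ [:: ph _])); lia. Qed.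

Lemma convmu : casoratian ph (irun (Posz N - 2) ++ [:: Posz N + 2]) = dets (mkseq X N.-1 ++ [:: X N.+2]).
Proof. by rewrite cas_dets map_cat (mapE 2) subn2 /= /X; congr (dets (_ ++ [:: ph _])); lia. Qed.

Lemma convs : casoratian ph (irun (Posz N - 3) ++ [:: Posz N - 1; Posz N]) = dets (mkseq X N.-2 ++ [:: X N.-1; X N]).
Proof.
rewrite cas_dets map_cat (mapE 3) /= /X; congr (dets (mkseq _ _ ++ [:: ph _; _])); lia.
Qed.

Lemma convth : casoratian ph (irun (Posz N - 3) ++ [:: Posz N - 1; Posz N + 1]) = dets (mkseq X N.-2 ++ [:: X N.-1; X N.+1]).
Proof.
rewrite cas_dets map_cat (mapE 3) /= /X; congr (dets (mkseq _ _ ++ [:: ph _; ph _])); lia.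
Qed.

Lemma convnu : (1 < N)%N -> casoratian ph (irun (Posz N - 4) ++ [:: Posz N - 2; Posz N - 1; Posz N]) = dets (mkseq X (N - 3)%N ++ [:: X N.-2; X N.-1; X N]).
Proof.
move=> h2; rewrite cas_dets map_cat (mapE 4) /= /X.
congr (dets (mkseq _ _ ++ [:: ph _; ph _; _])); lia.
Qed.
End Conv.

Lemma dets1 (C : comNzRingType) (v : 'cV[C]_1) : dets [:: v] = v 0 0.
Proof.
rewrite /dets /= (mx11_scalar (mxs [:: v])) det_scalar1 mxE /=.
by congr (v _ _); apply/val_inj.
Qed.


Unset Implicit Arguments. Set Strict Implicit. Set Printing Implicit Defensive.
Local Open Scope complex_scope.

Theorem theorem3p2 (R : realType) (al1 al2 al3 delta p q a b : R[i])
  (hpq : p != q) (hpa : p != a) (hpb : p != b)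
  (hqa : q != a) (hqb : q != b) (hab : a != b)
  (N : nat) (hN : (0 < N)%N)
  (phi : int -> int -> int -> int -> int -> 'cV[R[i]]_N)
  (K : 'M[R[i]]_N) :
  let s1 := p - delta in let s2 := q - delta in
  let s3 := a - delta in let s4 := b - delta in
  let e1 := eps1 al3 delta in let e2 := eps2 al2 al3 delta in
  let e3 := eps3 al1 al2 al3 delta in
  (forall n m al be l, s1 *: phi (n - 1) m al be l
      = phi n m al be l - phi (n - 1) m al be (l + 1)) ->
  (forall n m al be l, s2 *: phi n (m - 1) al be l
      = phi n m al be l - phi n (m - 1) al be (l + 1)) ->
  (forall n m al be l, s3 *: phi n m (al - 1) be l
      = phi n m al be l - phi n m (al - 1) be (l + 1)) ->
  (forall n m al be l, s4 *: phi n m al (be - 1) l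
      = phi n m al be l - phi n m al (be - 1) (l + 1)) ->
  (forall n m al be l, K *m phi n m al be l
      = phi n m al be (l + 4) - e1 *: phi n m al be (l + 3)
        + e2 *: phi n m al be (l + 2) - e3 *: phi n m al be (l + 1)) ->
  let Nz : int := Posz N in
  let cas (n m al be : int) (s : seq int) := casoratian (phi n m al be) s in
  let f n m al be := cas n m al be (irun (Nz - 1)) in
  let g n m al be := cas n m al be (irun (Nz - 2) ++ [:: Nz]) in
  let h n m al be := cas n m al be (irun (Nz - 2) ++ [:: Nz + 1]) in
  let s n m al be := cas n m al be (irun (Nz - 3) ++ [:: Nz - 1; Nz]) in
  let th n m al be := cas n m al be (irun (Nz - 3) ++ [:: Nz - 1; Nz + 1]) in
  let mu n m al be := cas n m al be (irun (Nz - 2) ++ [:: Nz + 2]) in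
  let nu n m al be := cas n m al be (irun (Nz - 4) ++ [:: Nz - 2; Nz - 1; Nz]) in
  forall n m al be : int,
  let F := f n m al be in let G := g n m al be in let H := h n m al be in
  let S := s n m al be in let TH := th n m al be in
  let MU := mu n m al be in let NU := nu n m al be in
  (* tilde: n+1 ; hat: m+1 ; hat-tilde: n+1, m+1 *)
  let Ft := f (n + 1) m al be in let Gt := g (n + 1) m al be in
  let Ht := h (n + 1) m al be in let St := s (n + 1) m al be in
  let THt := th (n + 1) m al be in let NUt := nu (n + 1) m al be in
  let Fh := f n (m + 1) al be in let Gh := g n (m + 1) al be in
  let Hh := h n (m + 1) al be in let Sh := s n (m + 1) al be in
  let THh := th n (m + 1) al be in let NUh := nu n (m + 1) al be in
  let Fht := f (n + 1) (m + 1) al be in let Ght := g (n + 1) (m + 1) al be in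
  let Hht := h (n + 1) (m + 1) al be in let MUht := mu (n + 1) (m + 1) al be in
  (Ft * (s1 * G + H) - Gt * (s1 * F + G) + F * St = 0) /\
      (      Fh * (s2 * G + H) - Gh * (s2 * F + G) + F * Sh = 0) /\
      (      Ft * (s1 * H + MU) - Ht * (s1 * F + G) + F * THt = 0) /\
      (      Fh * (s2 * H + MU) - Hh * (s2 * F + G) + F * THh = 0) /\
      (      Ft * (s1 * S + TH) - F * (s1 * St - NUt) - Gt * S = 0) /\
      (      Fh * (s2 * S + TH) - F * (s2 * Sh - NUh) - Gh * S = 0) /\
      (      Ft * Gh - Fh * Gt + (s1 - s2) * (Ft * Fh - F * Fht) = 0) /\
      (      Rpol e1 e2 e3 s1 s2 * (F * Fht - Ft * Fh)
      + Qpol e1 e2 s1 s2 * (G * Fht - F * Ght)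
      - (s1 + s2 + e1) * (G * Ght - F * Hht - Fht * S)
      + G * Hht - S * Ght - F * MUht + NU * Fht = 0).
Proof.
case: N hN phi K => [//|[|M]] hN phi K.
  move=> s1 s2 s3 s4 e1 e2 e3 H1 H2 H3 H4 HK Nz cas f g hh ss th mu nu n m al be.
  pose X (n m al be : int) (k : nat) := phi n m al be (Posz k).
  have Ef : forall n m al be, f n m al be = X n m al be 0%N 0 0.
    by move=> *; rewrite /f /cas convf dets1.
  have Eg : forall n m al be, g n m al be = X n m al be 1%N 0 0.
    by move=> *; rewrite /g /cas convg // dets1.
  have Eh : forall n m al be, hh n m al be = X n m al be 2%N 0 0.
    by move=> *; rewrite /hh /cas convh // dets1.
  have Emu : forall n m al be, mu n m al be = X n m al be 3%N 0 0.
    by move=> *; rewrite /mu /cas convmu // dets1.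
  have Es : forall n m al be, ss n m al be = 0.
    by move=> *; rewrite /ss /cas convs // dets_size.
  have Eth : forall n m al be, th n m al be = 0.
    by move=> *; rewrite /th /cas convth // dets_size.
  have Enu : forall n m al be, nu n m al be = 0.
    by move=> *; rewrite /nu /cas cas_dets dets_size // size_map size_cat /= (irunE 1 4).
  move=> F G H S TH MU NU Ft Gt Ht St THt NUt Fh Gh Hh Sh THh NUh Fht Ght Hht MUht.
  rewrite /F /G /H /S /TH /MU /NU /Ft /Gt /Ht /St /THt /NUt /Fh /Gh /Hh /Sh /THh /NUh /Fht /Ght /Hht /MUht.
  rewrite !Ef !Eg !Eh !Emu !Es !Eth !Enu.
  have P1 : forall k : nat, Posz k + 1 = Posz k.+1 by move=> k; lia.
  have hz : forall k, X (n + 1) m al be k 0 0 = s1 * X n m al be k 0 0 + X n m al be k.+1 0 0.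
    move=> k; have := H1 (n + 1) m al be (Posz k); rewrite addrK P1 => /(congr1 (fun v : 'cV[R[i]]_1 => v 0 0)); rewrite !mxE => e.
    by rewrite /X e; ring.
  have hw : forall k, X n (m + 1) al be k 0 0 = s2 * X n m al be k 0 0 + X n m al be k.+1 0 0.
    move=> k; have := H2 n (m + 1) al be (Posz k); rewrite addrK P1 => /(congr1 (fun v : 'cV[R[i]]_1 => v 0 0)); rewrite !mxE => e.
    by rewrite /X e; ring.
  have hu1 : forall k, X (n + 1) (m + 1) al be k 0 0 = s1 * X n (m + 1) al be k 0 0 + X n (m + 1) al be k.+1 0 0.
    move=> k; have := H1 (n + 1) (m + 1) al be (Posz k); rewrite addrK P1 => /(congr1 (fun v : 'cV[R[i]]_1 => v 0 0)); rewrite !mxE => e.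
    by rewrite /X e; ring.
  have hK : forall k, X n m al be k.+4 0 0 = K 0 0 * X n m al be k 0 0 + e1 * X n m al be k.+3 0 0
     - e2 * X n m al be k.+2 0 0 + e3 * X n m al be k.+1 0 0.
    move=> k; have := HK n m al be (Posz k).
    have -> : Posz k + 4 = Posz k.+4 by lia.
    have -> : Posz k + 3 = Posz k.+3 by lia.
    have -> : Posz k + 2 = Posz k.+2 by lia.
    rewrite P1 => /(congr1 (fun v : 'cV[R[i]]_1 => v 0 0)); rewrite !mxE big_ord1 => e.
    rewrite -/(X n m al be k) in e; rewrite e; ring.
  rewrite !hu1 !hz !hw (hK 1%N) (hK 0%N).
  rewrite /Rpol /Qpol; split; [ring | split; [ring | split; [ring | split; [ring | split; [ring | split; [ring | split; ring]]]]]].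
move=> s1 s2 s3 s4 e1 e2 e3 H1 H2 H3 H4 HK Nz cas f g hh ss th mu nu n m al be.
pose X (n m al be : int) (k : nat) := phi n m al be (Posz k).
have Ef : forall n m al be, f n m al be = dets (mkseq (X n m al be) M.+2) by move=> *; exact: convf.
have Eg : forall n m al be, g n m al be = dets (mkseq (X n m al be) M.+1 ++ [:: X n m al be M.+2]) by move=> *; exact: convg.
have Eh : forall n m al be, hh n m al be = dets (mkseq (X n m al be) M.+1 ++ [:: X n m al be M.+3]) by move=> *; exact: convh.
have Emu : forall n m al be, mu n m al be = dets (mkseq (X n m al be) M.+1 ++ [:: X n m al be M.+4]) by move=> *; exact: convmu.
have Es : forall n m al be, ss n m al be = dets (mkseq (X n m al be) M ++ [:: X n m al be M.+1; X n m al be M.+2]) by move=> *; exact: convs.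
have Eth : forall n m al be, th n m al be = dets (mkseq (X n m al be) M ++ [:: X n m al be M.+1; X n m al be M.+3]) by move=> *; exact: convth.
have Enu : forall n m al be, nu n m al be = dets (mkseq (X n m al be) M.-1 ++ [:: X n m al be M; X n m al be M.+1; X n m al be M.+2]).
  move=> *; rewrite /nu /cas convnu //; congr (dets (mkseq _ _ ++ _)); lia.
move=> F G H S TH MU NU Ft Gt Ht St THt NUt Fh Gh Hh Sh THh NUh Fht Ght Hht MUht.
rewrite /F /G /H /S /TH /MU /NU /Ft /Gt /Ht /St /THt /NUt /Fh /Gh /Hh /Sh /THh /NUh /Fht /Ght /Hht /MUht.
rewrite !Ef !Eg !Eh !Emu !Es !Eth !Enu.
have P1 : forall k : nat, Posz k + 1 = Posz k.+1 by move=> k; lia.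
have hz : forall k, X (n + 1) m al be k = s1 *: X n m al be k + X n m al be k.+1.
  move=> k; have := H1 (n + 1) m al be (Posz k); rewrite addrK P1 => e.
  by rewrite /X e subrK.
have hw : forall k, X n (m + 1) al be k = s2 *: X n m al be k + X n m al be k.+1.
  move=> k; have := H2 n (m + 1) al be (Posz k); rewrite addrK P1 => e.
  by rewrite /X e subrK.
have hu1 : forall k, X (n + 1) (m + 1) al be k = s1 *: X n (m + 1) al be k + X n (m + 1) al be k.+1.
  move=> k; have := H1 (n + 1) (m + 1) al be (Posz k); rewrite addrK P1 => e.
  by rewrite /X e subrK.
have hu2 : forall k, X (n + 1) (m + 1) al be k = s2 *: X (n + 1) m al be k + X (n + 1) m al be k.+1.
  move=> k; have := H2 (n + 1) (m + 1) al be (Posz k); rewrite addrK P1 => e.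
  by rewrite /X e subrK.
have hK : forall k, K *m X n m al be k = X n m al be k.+4 - e1 *: X n m al be k.+3
   + e2 *: X n m al be k.+2 - e3 *: X n m al be k.+1.
  move=> k; have := HK n m al be (Posz k).
  have -> : Posz k + 4 = Posz k.+4 by lia.
  have -> : Posz k + 3 = Posz k.+3 by lia.
  have -> : Posz k + 2 = Posz k.+2 by lia.
  by rewrite P1.
split; first exact: (eq1 hz).
split; first exact: (eq1 hw).
split; first exact: (eq3 hz).
split; first exact: (eq3 hw).
split; first exact: (eq5 hz).
split; first exact: (eq5 hw).
split; first exact: (eq7 hz hw hu1 hu2).
exact: (eq8 hz hw hu1 hK).
Qed.
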